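(* For the intercept model, with $\hat{B} = G_{21}G_{11}^{-1}$ and $\hat{\alpha} = (-\hat{B}, I_r)\bar{\mathbf{x}}$, the ordinary least squares estimator of the matrix of mean vectors $$ \hat{U}_1(\hat{\alpha},\hat{B}) = \left(I_p + \hat{B}'\hat{B}\right)^{-1}\left(I_p, \hat{B}'\right)\left(X - \begin{pmatrix}\mathbf{0}\\ \hat{\alpha}\mathbf{1}_n'\end{pmatrix}\right) $$ equals $$ \hat{U}_1(\hat{\alpha},\hat{B}) = n^{-1} X_1\mathbf{1}_n\mathbf{1}_n' + \left(G_{11}G_{11}'X_1 + G_{11}G_{21}'X_2\right)C_n, $$ and in particular differs from the expression $\left(G_{11}G_{11}'X_1 + G_{11}G_{21}'X_2\right)C_n$ by the additional term $n^{-1}X_1\mathbf{1}_n\mathbf{1}_n'$.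
   Context: Multivariate errors-in-variables model: observed $X = (X_1', X_2')'$ where $X_1$ is $p\times n$ and $X_2$ is $r\times n$ (columns $\mathbf{x}_{1i}$, $\mathbf{x}_{2i}$, $i=1,\dots,n$), with $X = U + E$, $U = (U_1', U_2')'$, $U_2 = \alpha\mathbf{1}_n' + BU_1$, where $U_1$ ($p\times n$) is the matrix of unknown mean vectors, $B$ is $r\times p$, $\alpha$ is an $r$-vector, $\mathbf{1}_n$ is the $n$-vector of ones, and the columns of $E$ are i.i.d. with mean $\mathbf{0}$ and covariance $\sigma^2 I_{p+r}$. In the intercept model ($\alpha$ unknown), $C_n = I_n - n^{-1}\mathbf{1}_n\mathbf{1}_n'$. Let $W = XC_nX'$ with eigen-decomposition $W = GDG'$, $D$ diagonal with ordered eigenvalues and $G$ a $(p+r)\times(p+r)$ orthogonal matrix partitioned as $G = \begin{pmatrix} G_{11} & G_{12}\\ G_{21} & G_{22}\end{pmatrix}$ with $G_{11}$ of size $p\times p$ (assumed invertible). Let $\bar{\mathbf{x}} = n^{-1}X\mathbf{1}_n$. *)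

(* Defs.v *)
From HB Require Import structures.
From mathcomp Require Import all_boot all_order all_algebra.
Set Implicit Arguments. Unset Strict Implicit. Unset Printing Implicit Defensive.
Import Order.TTheory GRing.Theory Num.Theory.
Local Open Scope ring_scope.

Definition ones (R : nzRingType) (n : nat) : 'cV[R]_n := const_mx 1.

Definition centering (R : fieldType) (n : nat) : 'M[R]_n :=
  1%:M - (n%:R)^-1 *: (ones R n *m (ones R n)^T).

Definition orthogonal_mx (R : nzRingType) (m : nat) (G : 'M[R]_m) : Prop :=
  G *m G^T = 1%:M /\ G^T *m G = 1%:M.

Definition xbar (R : fieldType) (m n : nat) (X : 'M[R]_(m, n)) : 'cV[R]_m :=
  (n%:R)^-1 *: (X *m ones R n).

Definition Bhat (R : fieldType) (p r : nat) (G11 : 'M[R]_p) (G21 : 'M[R]_(r, p))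
  : 'M[R]_(r, p) := G21 *m invmx G11.

Definition alphahat (R : fieldType) (p r n : nat) (B : 'M[R]_(r, p))
  (X : 'M[R]_(p + r, n)) : 'cV[R]_r :=
  row_mx (- B) 1%:M *m xbar X.

Definition U1hat (R : fieldType) (p r n : nat) (alpha : 'cV[R]_r)
  (B : 'M[R]_(r, p)) (X : 'M[R]_(p + r, n)) : 'M[R]_(p, n) :=
  invmx (1%:M + B^T *m B) *m row_mx 1%:M B^T
    *m (X - col_mx (0 : 'M[R]_(p, n)) (alpha *m (ones R n)^T)).

(* Main.v *)
Require Import Defs.
From HB Require Import structures.
From mathcomp Require Import all_boot all_order all_algebra.
Import Order.TTheory GRing.Theory Num.Theory.
Local Open Scope ring_scope.

Lemma cent_mul (R : fieldType) m n (M : 'M[R]_(m, n)) :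
  M *m centering R n = M - n%:R^-1 *: (M *m (ones R n *m (ones R n)^T)).
Proof. by rewrite /centering mulmxBr mulmx1 -scalemxAr. Qed.

Theorem mainTheorem1 (R : realFieldType) (p r n : nat)
  (X1 : 'M[R]_(p, n)) (X2 : 'M[R]_(r, n))
  (G11 : 'M[R]_p) (G12 : 'M[R]_(p, r)) (G21 : 'M[R]_(r, p)) (G22 : 'M[R]_r)
  (D : 'M[R]_(p + r)) :
  (0 < n)%N ->
  let X := col_mx X1 X2 in
  let G := block_mx G11 G12 G21 G22 in
  let W := X *m centering R n *m X^T in
  orthogonal_mx G ->
  is_diag_mx D ->
  (forall i j : 'I_(p + r), (i <= j)%N -> D j j <= D i i) ->
  W = G *m D *m G^T ->
  G11 \in unitmx ->
  let B := Bhat G11 G21 in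
  let a := alphahat B X in
  U1hat a B X
    = (n%:R)^-1 *: (X1 *m ones R n *m (ones R n)^T)
      + (G11 *m G11^T *m X1 + G11 *m G21^T *m X2) *m centering R n
  /\ U1hat a B X - (G11 *m G11^T *m X1 + G11 *m G21^T *m X2) *m centering R n
    = (n%:R)^-1 *: (X1 *m ones R n *m (ones R n)^T).
Proof.
move=> _ X G W [_ hGG] _ _ _ hU B a.
have hI : G11^T *m G11 + G21^T *m G21 = 1%:M.
  move: hGG; rewrite /G tr_block_mx mulmx_block (scalar_mx_block p r).
  by case/eq_block_mx.
have hT : G11^T *m (invmx G11)^T = 1%:M.
  by rewrite -trmx_mul mulVmx // trmx1.
have hBT : B^T = (invmx G11)^T *m G21^T by rewrite /B /Bhat trmx_mul.
have hM : G11 *m G11^T *m B^T = G11 *m G21^T.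
  by rewrite hBT !mulmxA -(mulmxA G11) hT mulmx1.
have hE : G11 *m G11^T + G11 *m G21^T *m (G21 *m invmx G11) = 1%:M.
  transitivity (G11 *m (G11^T *m G11 + G21^T *m G21) *m invmx G11);
    last by rewrite hI mulmx1 mulmxV.
  by rewrite mulmxDr mulmxDl !mulmxA (mulmxK hU).
have hinv : invmx (1%:M + B^T *m B) = G11 *m G11^T.
  have h1 : G11 *m G11^T *m (1%:M + B^T *m B) = 1%:M.
    by rewrite mulmxDr mulmx1 mulmxA hM /B /Bhat mulmxA -hE mulmxA.
  have h2 := mulmx1C h1.
  case: (mulmx1_unit h2) => hu _.
  by rewrite -[RHS](mulKmx hu) h2 mulmx1.
set c := (n%:R)^-1 : R.
set J := ones R n *m (ones R n)^T.
set K := G11 *m G11^T *m X1 + G11 *m G21^T *m X2.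
have ha : a *m (ones R n)^T = c *: (X2 *m J) - c *: (B *m X1 *m J).
  rewrite /a /alphahat /xbar /X mul_col_mx scale_col_mx mul_row_col mul1mx mulNmx.
  by rewrite mulmxDl mulNmx -!scalemxAl -scalemxAr -scalemxAl addrC /J !mulmxA.
have hU1 : U1hat a B X = K - G11 *m G21^T *m (a *m (ones R n)^T).
  rewrite /U1hat hinv mul_mx_row. have e1 : G11 *m G11^T *m 1%:M = G11 *m G11^T := mulmx1 _. rewrite e1 hM /X opp_col_mx add_col_mx oppr0 addr0 mul_row_col.
  by rewrite mulmxBr /K addrA.
have hX1 : X1 *m J = K *m J - G11 *m G21^T *m (X2 *m J) + G11 *m G21^T *m (B *m X1 *m J).
  rewrite -{1}[X1 *m J]mul1mx -hE /K /B /Bhat !mulmxDl !mulmxA addrK.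
  done.
have main : U1hat a B X = c *: (X1 *m J) + K *m centering R n.
  rewrite hU1 ha hX1 cent_mul -/J.
  rewrite mulmxBr -!scalemxAr -/c scalerDr scalerBr.
  rewrite [RHS]addrC !addrA subrK opprB addrA addrAC.
  done.
split; first by rewrite -mulmxA.
by rewrite main -mulmxA addrK.
Qed.
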